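(* Let $\mathcal V$ be a finite set of nodes, $\mathcal P$ a finite set of labels, $\mathcal E$ a set of unordered pairs of nodes, $\theta_{ip}\in\mathbb R$, and $\theta_{ij,pq}\le0$ for all $\{i,j\}\in\mathcal E$, $p,q\in\mathcal P$. Let $w^m_{ip},c^m\in\mathbb R$ ($m=1,\dots,M$) and $v^k_{ip},d^k\in\mathbb R$ ($k=1,\dots,K$). For $\vec y\in\{0,1\}^{\mathcal V\times\mathcal P}$, $\vec\lambda\in\mathbb R^{\mathcal V}$, $\vec\xi\in\mathbb R^M$, $\vec\pi\in\mathbb R^K$ let $$L(\vec y,\vec\lambda,\vec\xi,\vec\pi)=E_I(\vec y)+\sum_{i}\lambda_i\Big(\sum_p y_{ip}-1\Big)+\sum_{m=1}^M\xi_m\Big(\sum_{i,p}w^m_{ip}y_{ip}-c^m\Big)+\sum_{k=1}^K\pi_k\Big(\sum_{i,p}v^k_{ip}y_{ip}-d^k\Big),$$ where $E_I(\vec y)=\sum_{i,p}\theta_{ip}y_{ip}+\sum_{\{i,j\}\in\mathcal E}\sum_{p,q}\theta_{ij,pq}y_{ip}y_{jq}$, and $D(\vec\lambda,\vec\xi,\vec\pi)=\min_{\vec y\in\{0,1\}^{\mathcal V\times\mathcal P}}L(\vec y,\vec\lambda,\vec\xi,\vec\pi)$. Then the maximum of $D(\vec\lambda,\vec\xi,\vec\pi)$ over $\vec\lambda\in\mathbb R^{\mathcal V}$, $\vec\xi\in\mathbb R^M$, $\vec\pi\in\mathbb R^K$ with $\pi_k\ge0$ for all $k$ equals the optimal value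 of the linear program $$\min_{\vec y}\ \sum_{i,p}\theta_{ip}y_{ip}+\sum_{\{i,j\}\in\mathcal E}\sum_{p,q}\theta_{ij,pq}y_{ij,pq}$$ subject to $y_{ip}\in[0,1]$; $y_{ij,pq}\in[0,1]$; $y_{ij,pq}\le y_{ip}$, $y_{ij,pq}\le y_{jq}$ for all $\{i,j\}\in\mathcal E$, $p,q\in\mathcal P$; $\sum_p y_{ip}=1$ for all $i\in\mathcal V$; $\sum_{i,p}w^m_{ip}y_{ip}=c^m$ for $m=1,\dots,M$; and $\sum_{i,p}v^k_{ip}y_{ip}\le d^k$ for $k=1,\dots,K$.
   Context: This is pairwise energy minimization $E(\vec x)=\sum_i\theta_i(x_i)+\sum_{\{i,j\}}\theta_{ij}(x_i,x_j)$ in indicator variables $y_{ip}=[x_i=p]$, subject additionally to global linear equality and inequality constraints on the indicators; all these constraints together with the consistency constraints are relaxed by Lagrange multipliers ($\vec\pi\ge0$ for inequalities). *)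

(* Defs.v *)
From HB Require Import structures.
From mathcomp Require Import all_boot all_order all_algebra.
From mathcomp Require Import reals.
Set Implicit Arguments. Unset Strict Implicit. Unset Printing Implicit Defensive.
Import Order.TTheory GRing.Theory Num.Theory.
Local Open Scope ring_scope.

(* Nodes V, labels P (finite types); edges E : a set of pairs (i,j) representing
   unordered pairs {i,j} (hypotheses in the theorem: no loops, each unordered
   pair listed in at most one orientation).
   th1 i p = theta_{ip}, th2 i j p q = theta_{ij,pq} (for (i,j) in E).
   w m i p = w^m_{ip}, c m = c^m ; v k i p = v^k_{ip}, d k = d^k. *)

Section Energy.
Variables (R : realType) (V P : finType) (E : {set V * V}).
Variables (th1 : V -> P -> R) (th2 : V -> V -> P -> P -> R).
Variables (M K : nat) (w : 'I_M -> V -> P -> R) (c : 'I_M -> R)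
          (v : 'I_K -> V -> P -> R) (d : 'I_K -> R).

Definition yval (y : {ffun V * P -> bool}) (i : V) (p : P) : R := (y (i, p))%:R.

Definition energyI (y : {ffun V * P -> bool}) : R :=
  \sum_(i : V) \sum_(p : P) th1 i p * yval y i p
  + \sum_(e in E) \sum_(p : P) \sum_(q : P)
        th2 e.1 e.2 p q * yval y e.1 p * yval y e.2 q.

Definition lagrangian (y : {ffun V * P -> bool})
   (lam : V -> R) (xi : 'I_M -> R) (pi : 'I_K -> R) : R :=
  energyI y
  + \sum_(i : V) lam i * (\sum_(p : P) yval y i p - 1)
  + \sum_(m < M) xi m * (\sum_(i : V) \sum_(p : P) w m i p * yval y i p - c m)
  + \sum_(k < K) pi k * (\sum_(i : V) \sum_(p : P) v k i p * yval y i p - d k).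

Definition dualfun (lam : V -> R) (xi : 'I_M -> R) (pi : 'I_K -> R) : R :=
  \big[Num.min/lagrangian [ffun => false] lam xi pi]_(y : {ffun V * P -> bool})
     lagrangian y lam xi pi.

Definition lp_feasible (y1 : V -> P -> R) (y2 : V -> V -> P -> P -> R) : Prop :=
  [/\ (forall i p, 0 <= y1 i p <= 1),
      (forall e, e \in E -> forall p q, 0 <= y2 e.1 e.2 p q <= 1) /\
      (forall e, e \in E -> forall p q,
          y2 e.1 e.2 p q <= y1 e.1 p /\ y2 e.1 e.2 p q <= y1 e.2 q),
      (forall i, \sum_(p : P) y1 i p = 1),
      (forall m, \sum_(i : V) \sum_(p : P) w m i p * y1 i p = c m) &
      (forall k, \sum_(i : V) \sum_(p : P) v k i p * y1 i p <= d k)].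

Definition lp_objective (y1 : V -> P -> R) (y2 : V -> V -> P -> P -> R) : R :=
  \sum_(i : V) \sum_(p : P) th1 i p * y1 i p
  + \sum_(e in E) \sum_(p : P) \sum_(q : P) th2 e.1 e.2 p q * y2 e.1 e.2 p q.

End Energy.

(* Main.v *)
Require Import Defs.
From HB Require Import structures.
From mathcomp Require Import all_boot all_order all_algebra.
From mathcomp Require Import reals.
From mathcomp Require Import ring lra.
From Stdlib Require Import Classical.
Import Order.TTheory GRing.Theory Num.Theory.
Local Open Scope ring_scope.
Set Implicit Arguments. Unset Strict Implicit.

Lemma big_opt (F : realFieldType) (J : finType) (f : option J -> F) :
  \sum_(o : option J) f o = f None + \sum_(j : J) f (Some j).
Proof.
rewrite (bigD1 None) //=; congr (_ + _).
rewrite (reindex_omap Some id) //=.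
  by apply: eq_bigl => j; rewrite eqxx.
by case.
Qed.

Section Interval.
Variable F : realFieldType.

Lemma interval_ex (L U : seq F) :
  (forall l u, l \in L -> u \in U -> l <= u) ->
  exists t, (forall l, l \in L -> l <= t) /\ (forall u, u \in U -> t <= u).
Proof.
elim: L => [|l L IH] H.
  elim: U H => [|u U IHU] H; first by exists 0.
  have [|t [_ Ht]] := IHU; first by [].
  exists (Num.min u t); split => // u'; rewrite inE => /orP[/eqP->|/Ht].
    by rewrite ge_min lexx.
  by move=> h; rewrite ge_min h orbT.
have [t [Ht1 Ht2]] : exists t, (forall l, l \in L -> l <= t) /\ (forall u, u \in U -> t <= u).
  by apply: IH => l' u hl hu; apply: H => //; rewrite inE hl orbT.
exists (Num.max l t); split.
  move=> l'; rewrite inE => /orP[/eqP->|/Ht1 h]; first by rewrite le_max lexx.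
  by rewrite le_max h orbT.
move=> u hu; rewrite ge_max Ht2 // andbT; apply: H => //; exact: mem_head.
Qed.

Lemma max_ex (L : seq F) : L != [::] ->
  exists2 m, m \in L & forall l, l \in L -> l <= m.
Proof.
elim: L => [//|a L IH] _.
case: L IH => [|b L] IH.
  by exists a; rewrite ?mem_head // => l; rewrite inE => /eqP->.
have [m hm Hm] := IH isT.
case: (leP a m) => ham.
  exists m; first by rewrite inE hm orbT.
  by move=> l; rewrite inE => /orP[/eqP->//|/Hm].
exists a; first exact: mem_head.
move=> l; rewrite inE => /orP[/eqP->//|/Hm h]; exact: le_trans h (ltW ham).
Qed.
End Interval.

Section FM.
Variables (F : realFieldType) (X : finType).
Definition row := ({ffun X -> F} * F)%type.
Definition sat (x : X -> F) (r : row) : bool := r.2 <= \sum_j r.1 j * x j.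
Definition comb (a b : F) (r s : row) : row :=
  ([ffun j => a * r.1 j + b * s.1 j], a * r.2 + b * s.2).
Definition elim (k : X) (S : seq row) : seq row :=
  [seq r <- S | (r : row).1 k == 0] ++
  [seq comb (- (s : row).1 k) ((r : row).1 k) r s | r <- [seq r <- S | 0 < (r : row).1 k],
                                    s <- [seq r <- S | (r : row).1 k < 0]].

Lemma sum_comb a b (r s : row) x :
  \sum_j (comb a b r s).1 j * x j = a * \sum_j r.1 j * x j + b * \sum_j s.1 j * x j.
Proof.
rewrite !mulr_sumr -big_split /=; apply: eq_bigr => j _; rewrite ffunE; ring.
Qed.

Lemma sat_comb a b (r s : row) x : 0 <= a -> 0 <= b -> sat x r -> sat x s ->
  sat x (comb a b r s).
Proof.
move=> ha hb hr hs; rewrite /sat sum_comb /=.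
by apply: lerD; apply: ler_wpM2l.
Qed.

Lemma elim_sound (k : X) (S : seq row) x : all (sat x) S -> all (sat x) (elim k S).
Proof.
move=> /allP H; apply/allP => r; rewrite mem_cat => /orP[|].
  by rewrite mem_filter => /andP[_ /H].
move=> /allpairsP[[p q] [/= hp hq ->]].
move: hp hq; rewrite !mem_filter => /andP[hp /H sp] /andP[hq /H sq].
apply: sat_comb => //; last exact: ltW.
by rewrite oppr_ge0 ltW.
Qed.

Lemma elim_zero (k : X) (S : seq row) (r : row) : r \in elim k S -> r.1 k = 0.
Proof.
rewrite mem_cat => /orP[|]; first by rewrite mem_filter => /andP[/eqP].
by move=> /allpairsP[[p q] [/= _ _ ->]] /=; rewrite ffunE; ring.
Qed.

Lemma elim_keep (k j : X) (S : seq row) : (forall r, r \in S -> r.1 j = 0) ->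
  forall r, r \in elim k S -> r.1 j = 0.
Proof.
move=> H r; rewrite mem_cat => /orP[|]; first by rewrite mem_filter => /andP[_ /H].
move=> /allpairsP[[p q] [/= hp hq ->]] /=.
rewrite ffunE; move: hp hq; rewrite !mem_filter => /andP[_ /H->] /andP[_ /H->]; ring.
Qed.

Definition setf (x : X -> F) (k : X) (t : F) : X -> F :=
  fun j => if j == k then t else x j.

Lemma sum_setf (a : X -> F) x k t :
  \sum_j a j * setf x k t j = (\sum_j a j * x j) - a k * x k + a k * t.
Proof.
rewrite (bigD1 k) // [in RHS](bigD1 k) //= /setf eqxx.
have -> : \sum_(i | i != k) a i * (if i == k then t else x i) =
          \sum_(i | i != k) a i * x i.
  by apply: eq_bigr => i /negbTE ->.
ring.
Qed.

Lemma elim_complete (k : X) (S : seq row) x : all (sat x) (elim k S) ->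
  exists t, all (sat (setf x k t)) S.
Proof.
move=> /allP H.
pose rest (r : row) := (\sum_j r.1 j * x j) - r.1 k * x k.
pose lo (r : row) := (r.2 - rest r) / r.1 k.
pose up (r : row) := (rest r - r.2) / (- r.1 k).
have [|t [Hl Hu]] := @interval_ex F [seq lo r | r <- [seq r <- S | 0 < (r : row).1 k]]
                              [seq up r | r <- [seq r <- S | (r : row).1 k < 0]].
  move=> l u /mapP[p hp ->] /mapP[q hq ->].
  move: hp hq; rewrite !mem_filter => /andP[hp Sp] /andP[hq Sq].
  have := H (comb (- q.1 k) (p.1 k) p q).
  have hin : comb (- q.1 k) (p.1 k) p q \in elim k S.
    rewrite mem_cat; apply/orP; right.
    apply: (allpairs_f (fun r s : row => comb (- s.1 k) (r.1 k) r s)).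
      by rewrite mem_filter hp Sp.
    by rewrite mem_filter hq Sq.
  move=> /(_ hin).
  rewrite /sat sum_comb /= /lo /up /rest => h.
  have hq' : 0 < - q.1 k by rewrite oppr_gt0.
  rewrite ler_pdivrMr // mulrAC ler_pdivlMr //.
  nra.
exists t; apply/allP => r hr; rewrite /sat sum_setf.
case: (ltgtP (r.1 k) 0) => hk.
- have := Hu (up r); rewrite map_f ?mem_filter ?hk // => /(_ isT).
  rewrite /up /rest => h.
  have hk' : 0 < - r.1 k by rewrite oppr_gt0.
  move: h; rewrite ler_pdivlMr // => h; nra.
- have := Hl (lo r); rewrite map_f ?mem_filter ?hk // => /(_ isT).
  rewrite /lo /rest ler_pdivrMr // => h; nra.
- have := H r; rewrite mem_cat mem_filter hk eqxx hr /= => /(_ isT).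
  by rewrite /sat !mul0r subr0 addr0.
Qed.

Fixpoint elims (ks : seq X) (S : seq row) : seq row :=
  if ks is k :: ks' then elims ks' (elim k S) else S.

Lemma elims_sound (ks : seq X) (S : seq row) x : all (sat x) S -> all (sat x) (elims ks S).
Proof. by elim: ks S => //= k ks IH S h; apply: IH; apply: elim_sound. Qed.

Lemma elims_keep (ks : seq X) (j : X) (S : seq row) : (forall r, r \in S -> r.1 j = 0) ->
  forall r, r \in elims ks S -> r.1 j = 0.
Proof. by elim: ks S => //= k ks IH S h; apply: IH; apply: elim_keep. Qed.

Lemma elims_zero (ks : seq X) (S : seq row) (k : X) : k \in ks -> forall r, r \in elims ks S -> r.1 k = 0.
Proof.
elim: ks S => //= k' ks IH S; rewrite inE => /orP[/eqP->|hk].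
  by apply: elims_keep => r; apply: elim_zero.
exact: IH.
Qed.

Lemma elims_complete (ks : seq X) (S : seq row) x : all (sat x) (elims ks S) ->
  exists x', (forall j, j \notin ks -> x' j = x j) /\ all (sat x') S.
Proof.
elim: ks S x => [|k ks IH] S x /=; first by exists x.
move=> /IH [x'' [h1 h2]].
have [t ht] := elim_complete h2.
exists (setf x'' k t); split => // j; rewrite inE negb_or => /andP[hj hks].
by rewrite /setf (negbTE hj) h1.
Qed.

Variables (I : finType) (A : I -> row).
Definition incone (r : row) := exists y : I -> F, [/\ (forall i, 0 <= y i),
  (forall j, r.1 j = \sum_i y i * (A i).1 j) & r.2 = \sum_i y i * (A i).2].

Lemma incone_comb a b (r s : row) : 0 <= a -> 0 <= b -> incone r -> incone s ->
  incone (comb a b r s).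
Proof.
move=> ha hb [y [y0 y1 y2]] [z [z0 z1 z2]].
exists (fun i => a * y i + b * z i); split.
- by move=> i; apply: addr_ge0; apply: mulr_ge0.
- move=> j /=; rewrite ffunE y1 z1 !mulr_sumr -big_split /=; apply: eq_bigr => i _; ring.
- rewrite /= y2 z2 !mulr_sumr -big_split /=; apply: eq_bigr => i _; ring.
Qed.

Lemma elim_cone (k : X) (S : seq row) : (forall r, r \in S -> incone r) ->
  forall r, r \in elim k S -> incone r.
Proof.
move=> H r; rewrite mem_cat => /orP[|]; first by rewrite mem_filter => /andP[_ /H].
move=> /allpairsP[[p q] [/= hp hq ->]].
move: hp hq; rewrite !mem_filter => /andP[hp /H sp] /andP[hq /H sq].
apply: incone_comb => //; last exact: ltW.
by rewrite oppr_ge0 ltW.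
Qed.

Lemma elims_cone (ks : seq X) (S : seq row) : (forall r, r \in S -> incone r) ->
  forall r, r \in elims ks S -> incone r.
Proof. by elim: ks S => //= k ks IH S h; apply: IH; apply: elim_cone. Qed.

Lemma S0_cone (r : row) : r \in [seq A i | i <- enum I] -> incone r.
Proof.
move=> /mapP[i _ ->]; exists (fun i' => (i' == i)%:R); split.
- by move=> i'; rewrite ler0n.
- move=> j; rewrite (bigD1 i) //= eqxx mul1r big1 ?addr0 // => i' /negbTE->.
  by rewrite mul0r.
- rewrite (bigD1 i) //= eqxx mul1r big1 ?addr0 // => i' /negbTE->.
  by rewrite mul0r.
Qed.

Lemma S0_sat x : all (sat x) [seq A i | i <- enum I] = [forall i, sat x (A i)].
Proof.
apply/allP/forallP => [H i|H r /mapP[i _ ->]] //.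
by apply: H; rewrite map_f // mem_enum.
Qed.
End FM.


Section LP.
Variables (F : realFieldType) (I J : finType) (A : I -> J -> F) (b : I -> F) (c : J -> F).

Definition pfeas (x : J -> F) := forall i, b i <= \sum_j A i j * x j.
Definition dfeas (y : I -> F) := (forall i, 0 <= y i) /\ forall j, \sum_i y i * A i j = c j.

Lemma weak_dual x y : pfeas x -> dfeas y -> \sum_i y i * b i <= \sum_j c j * x j.
Proof.
move=> hx [y0 yc].
apply: (@le_trans _ _ (\sum_i y i * \sum_j A i j * x j)).
  by apply: ler_sum => i _; apply: ler_wpM2l.
under eq_bigr do rewrite mulr_sumr.
rewrite exchange_big /= le_eqVlt; apply/orP; left; apply/eqP; apply: eq_bigr => j _.
by rewrite -yc mulr_suml; apply: eq_bigr => i _; rewrite mulrA.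
Qed.

Definition Arow (o : option I) : row F (option J) :=
  match o with
  | Some i => ([ffun o' => if o' is Some j then A i j else 0], b i)
  | None => ([ffun o' => if o' is Some j then - c j else 1], 0)
  end.

Let S0 := [seq Arow o | o <- enum {: option I}].
Let ks := [seq Some j | j <- enum J].
Let S := elims ks S0.

Lemma fz r : r \in S -> forall j, r.1 (Some j) = 0.
Proof. by move=> hr j; apply: (elims_zero _ hr); rewrite map_f // mem_enum. Qed.

Lemma fsum r x : r \in S -> \sum_o r.1 o * x o = r.1 None * x None.
Proof.
move=> hr; rewrite big_opt big1 ?addr0 // => j _; by rewrite fz // mul0r.
Qed.

Lemma fcone r : r \in S -> exists y : option I -> F, [/\ (forall o, 0 <= y o),
   (forall j, - (y None * c j) + \sum_i y (Some i) * A i j = 0),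
   r.1 None = y None & r.2 = \sum_i y (Some i) * b i].
Proof.
move=> hr; have [y [y0 y1 y2]] := elims_cone (@S0_cone _ _ _ Arow) hr.
exists y; split => //.
- move=> j; have h := fz hr j; rewrite y1 big_opt /= ffunE mulrN in h.
  rewrite -[RHS]h; congr (_ + _).
  by apply: eq_bigr => i _; rewrite ffunE.
- rewrite y1 big_opt /= ffunE mulr1 big1 ?addr0 // => i _; by rewrite ffunE mulr0.
- by rewrite y2 big_opt /= mulr0 add0r.
Qed.

Lemma fback x : all (sat x) S -> exists x1, pfeas x1 /\ \sum_j c j * x1 j <= x None.
Proof.
move=> /elims_complete [x' [h1 h2]].
have hN : x' None = x None by apply: h1; apply/mapP => -[].
move: h2; rewrite S0_sat => /forallP h2.
exists (fun j => x' (Some j)); split.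
  move=> i; have := h2 (Some i); rewrite /sat big_opt /= ffunE mul0r add0r.
  by under eq_bigr do rewrite ffunE.
have := h2 None; rewrite /sat big_opt /= ffunE mul1r hN.
under eq_bigr do rewrite ffunE.
under eq_bigr do rewrite mulNr.
rewrite sumrN => h.
by rewrite -subr_ge0.
Qed.

Lemma fsound x1 : pfeas x1 ->
  all (sat (fun o => if o is Some j then x1 j else \sum_j c j * x1 j)) S.
Proof.
move=> hx; apply: elims_sound; rewrite S0_sat; apply/forallP => -[i|].
  rewrite /sat big_opt /= ffunE mul0r add0r.
  under eq_bigr do rewrite ffunE.
  exact: hx.
rewrite /sat big_opt /= ffunE mul1r.
rewrite [X in _ + X](eq_bigr (fun j => - (c j * x1 j))); last by move=> j _; rewrite ffunE mulNr.
by rewrite sumrN subrr.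
Qed.

Lemma r1_ge0 r : r \in S -> 0 <= r.1 None.
Proof. by move=> /fcone [y [y0 _ -> _]]. Qed.

Lemma farkas : ~ (exists x, pfeas x) ->
  exists y : I -> F, [/\ (forall i, 0 <= y i), (forall j, \sum_i y i * A i j = 0)
                      & 0 < \sum_i y i * b i].
Proof.
move=> nf.
case: (boolP (has (fun r : row F (option J) => (r.1 None == 0) && (0 < r.2)) S)).
  move=> /hasP [r hr /andP[/eqP h0 hp]].
  have [y [y0 y1 y2 y3]] := fcone hr.
  exists (fun i => y (Some i)); split => //.
    by move=> j; have := y1 j; rewrite -y2 h0 mul0r oppr0 add0r.
  by rewrite -y3.
move=> /hasPn hn; exfalso.
have [|t [Ht _]] := @interval_ex F [seq (r : row F (option J)).2 / r.1 None | r <- [seq r <- S | 0 < (r : row F (option J)).1 None]] [::] => //.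
apply: nf.
have [|x1 [hx _]] := @fback (fun o => if o is Some _ then 0 else t).
  apply/allP => r hr; rewrite /sat fsum //.
  have := r1_ge0 hr; rewrite le_eqVlt => /orP[/eqP h|h].
    by have := hn r hr; rewrite -h eqxx /= mul0r -leNgt.
  have hin : r \in [seq r <- S | 0 < (r : row F (option J)).1 None] by rewrite mem_filter h.
  have := Ht _ (map_f (fun r : row F (option J) => r.2 / r.1 None) hin).
  by rewrite ler_pdivrMr // mulrC.
by exists x1.
Qed.

Lemma strong_dual x0 y0 : pfeas x0 -> dfeas y0 ->
  exists x y, [/\ pfeas x, dfeas y & \sum_j c j * x j = \sum_i y i * b i].
Proof.
move=> hx0 hy0.
have hs := fsound hx0.
pose L := [seq (r : row F (option J)).2 / r.1 None | r <- [seq r <- S | 0 < (r : row F (option J)).1 None]].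
have zrow : forall r, r \in S -> r.1 None = 0 -> r.2 <= 0.
  move=> r hr h0; have := allP hs r hr; by rewrite /sat fsum // h0 mul0r.
case: (eqVneq L [::]) => hL.
  exfalso.
  have [|x1 [hx1 hc]] := @fback (fun o => if o is Some _ then 0 else \sum_i y0 i * b i - 1).
    apply/allP => r hr; rewrite /sat fsum //.
    have := r1_ge0 hr; rewrite le_eqVlt => /orP[/eqP h|h].
      by rewrite -h mul0r; apply: zrow.
    suff : r.2 / r.1 None \in L by rewrite hL.
    have hin : r \in [seq r <- S | 0 < (r : row F (option J)).1 None] by rewrite mem_filter h.
    exact: (map_f (fun r : row F (option J) => r.2 / r.1 None) hin).
  have := weak_dual hx1 hy0; lra.
have [m /mapP [rs] ] := max_ex hL.
rewrite mem_filter => /andP[hpos hrs] hm Hm.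
have [|x1 [hx1 hc]] := @fback (fun o => if o is Some _ then 0 else m).
  apply/allP => r hr; rewrite /sat fsum //.
  have := r1_ge0 hr; rewrite le_eqVlt => /orP[/eqP h|h].
    by rewrite -h mul0r; apply: zrow.
  have hin : r \in [seq r <- S | 0 < (r : row F (option J)).1 None] by rewrite mem_filter h.
  have := Hm _ (map_f (fun r : row F (option J) => r.2 / r.1 None) hin).
  by rewrite ler_pdivrMr // mulrC.
have [y [z0 z1 z2 z3]] := fcone hrs.
have hs0 : 0 < y None by rewrite -z2.
have hd : dfeas (fun i => y (Some i) / y None).
  split; first by move=> i; apply: divr_ge0.
  move=> j; have h := z1 j.
  rewrite (eq_bigr (fun i => y (Some i) * A i j / y None)); last by move=> i _; rewrite mulrAC.
  rewrite -mulr_suml.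
  have -> : \sum_i y (Some i) * A i j = y None * c j by lra.
  by rewrite mulrAC divff ?mul1r // gt_eqF.
exists x1, (fun i => y (Some i) / y None); split => //.
have hb : \sum_i y (Some i) / y None * b i = m.
  by rewrite hm z3 z2 mulr_suml; apply: eq_bigr => i _; rewrite mulrAC.
have := weak_dual hx1 hd; rewrite hb => h; lra.
Qed.
End LP.


Section TS.
Variable F : realFieldType.
Fixpoint ts (prev : F) (u : seq F) (G : F -> F) : F :=
  if u is a :: u' then (a - prev) * G a + ts a u' G else 0.

Lemma ts_add prev u (f g : F -> F) :
  ts prev u (fun t => f t + g t) = ts prev u f + ts prev u g.
Proof. elim: u prev => /= [|a u IH] prev; first by rewrite addr0. rewrite IH; ring. Qed.

Lemma ts_scal prev u (k : F) (f : F -> F) :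
  ts prev u (fun t => k * f t) = k * ts prev u f.
Proof. elim: u prev => /= [|a u IH] prev; first by rewrite mulr0. rewrite IH; ring. Qed.

Lemma ts_const prev u (k : F) :
  ts prev u (fun _ => k) = k * ts prev u (fun _ => 1).
Proof. elim: u prev => /= [|a u IH] prev; first by rewrite mulr0. rewrite IH; ring. Qed.

Lemma ts_sum prev u (I : Type) (r : seq I) (P : pred I) (f : I -> F -> F) :
  ts prev u (fun t => \sum_(i <- r | P i) f i t) = \sum_(i <- r | P i) ts prev u (f i).
Proof.
elim: u prev => /= [|a u IH] prev; first by rewrite big1.
by rewrite IH mulr_sumr -big_split.
Qed.

Lemma ts_ext_in prev u (f g : F -> F) : {in u, f =1 g} -> ts prev u f = ts prev u g.
Proof.
elim: u prev => //= a u IH prev H.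
rewrite H ?mem_head //; congr (_ + _); apply: IH => t ht; apply: H.
by rewrite inE ht orbT.
Qed.

Lemma path_ge (prev : F) (u : seq F) : path <=%R prev u -> forall t, t \in u -> prev <= t.
Proof.
rewrite path_sortedE; last exact: (@le_trans _ F).
by move=> /andP[/allP h _].
Qed.

Lemma ts_zero prev u x : path <=%R prev u -> x < prev ->
  ts prev u (fun t => ((t <= x)%R)%:R) = 0.
Proof.
elim: u prev => //= a u IH prev /andP[hpa hp] hx.
have hax : x < a by exact: lt_le_trans hx hpa.
by rewrite IH // leNgt hax mulr0 add0r.
Qed.

Lemma ts_ind prev u x : path <=%R prev u -> prev <= x -> x \in prev :: u ->
  ts prev u (fun t => ((t <= x)%R)%:R) = x - prev.
Proof.
elim: u prev => /= [|a u IH] prev.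
  by move=> _ _; rewrite inE => /eqP->; rewrite subrr.
move=> /andP[hpa hp] hpx hx.
case: (leP a x) => hax.
  rewrite mulr1 IH //; first ring.
  move: hx; rewrite in_cons => /orP[/eqP hxp|//].
  have -> : x = a by apply/eqP; rewrite eq_le hax andbT hxp.
  exact: mem_head.
rewrite ts_zero // mulr0 addr0.
move: hx; rewrite in_cons => /orP[/eqP->|hx]; first by rewrite subrr.
move: hx; rewrite in_cons => /orP[/eqP hxa|hx]; first by move: hax; rewrite hxa ltxx.
by move: (path_ge hp hx); rewrite leNgt hax.
Qed.

Lemma ts_ge prev u (m : F) G : path <=%R prev u -> (forall t, t \in u -> m <= G t) ->
  m * ts prev u (fun _ => 1) <= ts prev u G.
Proof.
elim: u prev => /= [|a u IH] prev; first by rewrite mulr0.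
move=> /andP[hpa hp] H.
rewrite mulrDr mulr1 [m * (a - prev)]mulrC; apply: lerD.
  by apply: ler_wpM2l; [rewrite subr_ge0 | apply: H; exact: mem_head].
by apply: IH => // t ht; apply: H; rewrite inE ht orbT.
Qed.
End TS.


Section Main.
Variables (R : realType) (V P : finType) (E : {set V * V}).
Variables (th1 : V -> P -> R) (th2 : V -> V -> P -> P -> R).
Variables (M K : nat) (w : 'I_M -> V -> P -> R) (c : 'I_M -> R)
          (v : 'I_K -> V -> P -> R) (d : 'I_K -> R).
Hypothesis hth2 : forall e, e \in E -> forall p q, th2 e.1 e.2 p q <= 0.

Definition Lg (z1 : V -> P -> R) (z2 : V -> V -> P -> P -> R) lam (xi : 'I_M -> R) (pi : 'I_K -> R) :=
  lp_objective E th1 th2 z1 z2 + \sum_(i : V) lam i * (\sum_(p : P) z1 i p - 1)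
  + \sum_(m < M) xi m * (\sum_(i : V) \sum_(p : P) w m i p * z1 i p - c m)
  + \sum_(k < K) pi k * (\sum_(i : V) \sum_(p : P) v k i p * z1 i p - d k).

Lemma lag_Lg y lam xi pi : lagrangian E th1 th2 w c v d y lam xi pi =
  Lg (yval R y) (fun i j p q => yval R y i p * yval R y j q) lam xi pi.
Proof.
rewrite /lagrangian /Lg /energyI /lp_objective; congr (_ + _ + _ + _).
congr (_ + _); apply: eq_bigr => e _; apply: eq_bigr => p _; apply: eq_bigr => q _.
by rewrite mulrA.
Qed.

Lemma mult_nf (Ix : finType) (mu : Ix -> R) (W : Ix -> V -> P -> R) (cc : Ix -> R) z1 :
  \sum_m mu m * (\sum_(i : V) \sum_(p : P) W m i p * z1 i p - cc m) =
  \sum_(i : V) \sum_(p : P) (\sum_m mu m * W m i p) * z1 i p - \sum_m mu m * cc m.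
Proof.
under eq_bigr do rewrite mulrBr.
rewrite sumrB; congr (_ - _).
under eq_bigr do rewrite mulr_sumr.
rewrite exchange_big /=; apply: eq_bigr => i _.
under eq_bigr do rewrite mulr_sumr.
rewrite exchange_big /=; apply: eq_bigr => p _.
by rewrite mulr_suml; apply: eq_bigr => m _; rewrite mulrA.
Qed.

Lemma lam_nf (lam : V -> R) (z1 : V -> P -> R) :
  \sum_(i : V) lam i * (\sum_(p : P) z1 i p - 1) =
  \sum_(i : V) \sum_(p : P) lam i * z1 i p - \sum_i lam i.
Proof.
under eq_bigr do rewrite mulrBr mulr1 mulr_sumr.
by rewrite sumrB.
Qed.

Definition acoef lam (xi : 'I_M -> R) (pi : 'I_K -> R) i p :=
  th1 i p + lam i + \sum_m xi m * w m i p + \sum_k pi k * v k i p.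
Definition K0 (lam : V -> R) (xi : 'I_M -> R) (pi : 'I_K -> R) :=
  - \sum_i lam i - \sum_m xi m * c m - \sum_k pi k * d k.

Lemma Lg_nf z1 z2 lam xi pi : Lg z1 z2 lam xi pi =
  K0 lam xi pi + \sum_(i : V) \sum_(p : P) acoef lam xi pi i p * z1 i p
  + \sum_(e in E) \sum_(p : P) \sum_(q : P) th2 e.1 e.2 p q * z2 e.1 e.2 p q.
Proof.
rewrite /Lg /lp_objective lam_nf !mult_nf /K0.
have -> : \sum_(i : V) \sum_(p : P) acoef lam xi pi i p * z1 i p =
   \sum_(i : V) \sum_(p : P) th1 i p * z1 i p + \sum_(i : V) \sum_(p : P) lam i * z1 i p
   + \sum_(i : V) \sum_(p : P) (\sum_m xi m * w m i p) * z1 i p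
   + \sum_(i : V) \sum_(p : P) (\sum_k pi k * v k i p) * z1 i p.
  rewrite -!big_split /=; apply: eq_bigr => i _; rewrite -!big_split /=.
  by apply: eq_bigr => p _; rewrite /acoef; ring.
ring.
Qed.

Lemma Lg_le_lp z1 z2 lam xi pi : lp_feasible E w c v d z1 z2 -> (forall k, 0 <= pi k) ->
  Lg z1 z2 lam xi pi <= lp_objective E th1 th2 z1 z2.
Proof.
move=> [_ _ h1 h2 h3] hpi; rewrite /Lg.
rewrite big1 ?addr0; last by move=> i _; rewrite h1 subrr mulr0.
rewrite big1 ?addr0; last by move=> m _; rewrite h2 subrr mulr0.
rewrite -[X in _ <= X]addr0 lerD2l.
apply: sumr_le0 => k _; apply: mulr_ge0_le0 => //; rewrite subr_le0; exact: h3.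
Qed.

Lemma ind_min (t x y : R) : ((t <= x)%R)%:R * ((t <= y)%R)%:R = ((t <= Num.min x y)%R)%:R :> R.
Proof.
rewrite le_min; case: (t <= x)%R; case: (t <= y)%R => /=;
  by rewrite ?mul1r ?mul0r ?mulr0.
Qed.

Lemma dual_le_lp z1 z2 lam xi pi : (forall k, 0 <= pi k) -> lp_feasible E w c v d z1 z2 ->
  dualfun E th1 th2 w c v d lam xi pi <= lp_objective E th1 th2 z1 z2.
Proof.
move=> hpi hf.
have hf' := hf; move: hf' => [hb [hb2 hle] _ _ _].
pose u := sort <=%R (1 :: [seq z1 cc.1 cc.2 | cc <- enum {: V * P}]).
have hu0 : forall t, t \in u -> 0 <= t <= 1.
  move=> t; rewrite mem_sort in_cons => /orP[/eqP->|]; first by rewrite ler01 lexx.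
  by move=> /mapP[cc _ ->]; apply: hb.
have hpath : path <=%R 0 u.
  rewrite path_sortedE; last exact: (@le_trans _ R).
  rewrite sort_le_sorted andbT; apply/allP => t /hu0 /andP[]//.
have hz : forall i p, z1 i p \in 0 :: u.
  move=> i p; rewrite in_cons mem_sort in_cons; apply/orP; right; apply/orP; right.
  exact: (map_f (fun cc : V * P => z1 cc.1 cc.2) (mem_enum _ (i, p))).
have h1 : ts 0 u (fun _ => 1) = 1.
  rewrite (@ts_ext_in R 0 u _ (fun t => ((t <= 1)%R)%:R)) ?ts_ind ?subr0 //.
  - by rewrite in_cons mem_sort mem_head orbT.
  - by move=> t /hu0 /andP[_ ->].
pose yu t : {ffun V * P -> bool} := [ffun cc : V * P => (t <= z1 cc.1 cc.2)%R].
pose D := dualfun E th1 th2 w c v d lam xi pi.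
have step1 : D <= ts 0 u (fun t => lagrangian E th1 th2 w c v d (yu t) lam xi pi).
  have := ts_ge (m := D) (G := fun t => lagrangian E th1 th2 w c v d (yu t) lam xi pi) hpath.
  rewrite h1 mulr1; apply => t _; exact: bigmin_le.
apply: (le_trans step1).
rewrite (@ts_ext_in R 0 u _ (fun t => K0 lam xi pi
     + \sum_(i : V) \sum_(p : P) acoef lam xi pi i p * ((t <= z1 i p)%R)%:R
     + \sum_(e in E) \sum_(p : P) \sum_(q : P) th2 e.1 e.2 p q *
          ((t <= Num.min (z1 e.1 p) (z1 e.2 q))%R)%:R)); last first.
  move=> t _; rewrite lag_Lg Lg_nf; congr (_ + _ + _).
    by apply: eq_bigr => i _; apply: eq_bigr => p _; rewrite /yval ffunE.
  apply: eq_bigr => e _; apply: eq_bigr => p _; apply: eq_bigr => q _.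
  by rewrite /yval !ffunE ind_min.
rewrite !ts_add ts_const h1 mulr1 !ts_sum.
rewrite ts_const h1 mulr1 ts_const h1 mulr1.
have hS1 : \sum_i ts 0 u (fun t : R => \sum_p acoef lam xi pi i p * ((t <= z1 i p)%R)%:R)
   = \sum_i \sum_p acoef lam xi pi i p * z1 i p.
  apply: eq_bigr => i _; rewrite ts_sum; apply: eq_bigr => p _.
  by rewrite ts_scal ts_ind ?subr0 //; have /andP[] := hb i p.
have hmin : forall e p q, e \in E -> 0 <= Num.min (z1 e.1 p) (z1 e.2 q) /\
     Num.min (z1 e.1 p) (z1 e.2 q) \in 0 :: u.
  move=> e p q _; rewrite /Num.min; case: ifP => _.
    by split => //; have /andP[] := hb e.1 p.
  by split => //; have /andP[] := hb e.2 q.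
have hS2 : \sum_(e in E) ts 0 u (fun t : R => \sum_p \sum_q th2 e.1 e.2 p q *
       ((t <= Num.min (z1 e.1 p) (z1 e.2 q))%R)%:R)
   = \sum_(e in E) \sum_p \sum_q th2 e.1 e.2 p q * Num.min (z1 e.1 p) (z1 e.2 q).
  apply: eq_bigr => e he; rewrite ts_sum; apply: eq_bigr => p _.
  rewrite ts_sum; apply: eq_bigr => q _.
  have [h0 hm] := hmin e p q he.
  by rewrite ts_scal ts_ind ?subr0.
rewrite hS1 hS2.
have hT : \sum_(e in E) \sum_p \sum_q th2 e.1 e.2 p q * Num.min (z1 e.1 p) (z1 e.2 q)
   <= \sum_(e in E) \sum_p \sum_q th2 e.1 e.2 p q * z2 e.1 e.2 p q.
  apply: ler_sum => e he; apply: ler_sum => p _; apply: ler_sum => q _.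
  apply: ler_wnM2l; first exact: hth2.
  have [h1' h2'] := hle e he p q.
  by rewrite le_min h1' h2'.
apply: (le_trans _ (Lg_le_lp lam xi hf hpi)).
rewrite Lg_nf /K0; exact: lerD.
Qed.

Definition Yt := {ffun V * P -> bool}.
Definition gI (y : Yt) i := \sum_(p : P) yval R y i p - 1.
Definition hM (y : Yt) m := \sum_(i : V) \sum_(p : P) w m i p * yval R y i p - c m.
Definition fK (y : Yt) k := \sum_(i : V) \sum_(p : P) v k i p * yval R y i p - d k.
Definition Rw := (Yt + (bool + ((V + V) + (('I_M + 'I_M) + 'I_K))))%type.
Definition sg (s : bool) : R := if s then 1 else -1.
Definition Amat (r : Rw) (y : Yt) : R :=
  match r with
  | inl y' => (y' == y)%:R
  | inr (inl s) => sg s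
  | inr (inr (inl (inl i))) => gI y i
  | inr (inr (inl (inr i))) => - gI y i
  | inr (inr (inr (inl (inl m)))) => hM y m
  | inr (inr (inr (inl (inr m)))) => - hM y m
  | inr (inr (inr (inr k))) => - fK y k
  end.
Definition bvec (r : Rw) : R := if r is inr (inl s) then sg s else 0.
Definition cvec (y : Yt) : R := energyI E th1 th2 y.

Definition tau (z : Rw -> R) := z (inr (inl true)) - z (inr (inl false)).
Definition zLP (z : Rw -> R) i := z (inr (inr (inl (inl i)))).
Definition zLN (z : Rw -> R) i := z (inr (inr (inl (inr i)))).
Definition zMP (z : Rw -> R) m := z (inr (inr (inr (inl (inl m))))).
Definition zMN (z : Rw -> R) m := z (inr (inr (inr (inl (inr m))))).
Definition zK (z : Rw -> R) k := z (inr (inr (inr (inr k)))).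

Lemma sumMN (T : Type) (r : seq T) (F G : T -> R) :
  \sum_(i <- r) F i * - G i = - \sum_(i <- r) F i * G i.
Proof. by rewrite -sumrN; apply: eq_bigr => i _; rewrite mulrN. Qed.

Lemma Adecomp (z : Rw -> R) y : \sum_r z r * Amat r y =
  z (inl y) + tau z + (\sum_i zLP z i * gI y i - \sum_i zLN z i * gI y i)
  + (\sum_m zMP z m * hM y m - \sum_m zMN z m * hM y m) - \sum_k zK z k * fK y k.
Proof.
rewrite !big_sumType big_bool /=.
rewrite (bigD1 y) //= eqxx mulr1 big1 ?addr0; last by move=> y' /negbTE->; rewrite mulr0.
rewrite /tau /sg /zLP /zLN /zMP /zMN /zK.
rewrite !sumMN; ring.
Qed.

Lemma bsum (z : Rw -> R) : \sum_r z r * bvec r = tau z.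
Proof.
rewrite !big_sumType big_bool /= !big1; try by move=> *; rewrite mulr0.
rewrite /tau /sg; ring.
Qed.

Definition lamS (z : Rw -> R) t i := - (t * (zLP z i - zLN z i)).
Definition xiS (z : Rw -> R) t m := - (t * (zMP z m - zMN z m)).
Definition piS (z : Rw -> R) t k := t * zK z k.

Lemma lin2 (T : finType) (a b g : T -> R) t :
  \sum_i (- (t * (a i - b i))) * g i = - (t * (\sum_i a i * g i - \sum_i b i * g i)).
Proof.
rewrite -sumrB mulr_sumr -sumrN; apply: eq_bigr => i _; ring.
Qed.

Lemma lin1 (T : finType) (a g : T -> R) t :
  \sum_i (t * a i) * g i = t * \sum_i a i * g i.
Proof. rewrite mulr_sumr; apply: eq_bigr => i _; ring. Qed.

Lemma lagS z t y : lagrangian E th1 th2 w c v d y (lamS z t) (xiS z t) (piS z t) =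
  energyI E th1 th2 y - t * (\sum_r z r * Amat r y - z (inl y) - tau z).
Proof.
rewrite Adecomp.
have -> : lagrangian E th1 th2 w c v d y (lamS z t) (xiS z t) (piS z t) =
  energyI E th1 th2 y + \sum_i lamS z t i * gI y i + \sum_m xiS z t m * hM y m
   + \sum_k piS z t k * fK y k by [].
rewrite /lamS /xiS /piS !lin2 lin1; ring.
Qed.

Lemma dual_ge (tt : R) lam xi pi :
  (forall y, tt <= lagrangian E th1 th2 w c v d y lam xi pi) ->
  tt <= dualfun E th1 th2 w c v d lam xi pi.
Proof. by move=> h; apply: le_bigmin => // y _. Qed.

Definition D0 := \big[Num.min/energyI E th1 th2 [ffun => false]]_(y : Yt) energyI E th1 th2 y.
Lemma D0_le y : D0 <= energyI E th1 th2 y.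
Proof. exact: bigmin_le. Qed.

Lemma unbounded : ~ (exists mu, pfeas Amat bvec mu) ->
  forall r : R, exists lam xi pi, (forall k, 0 <= pi k) /\
     r < dualfun E th1 th2 w c v d lam xi pi.
Proof.
move=> /(farkas cvec) [z [z0 zA zb]] r; rewrite bsum in zb.
pose t := (`|r - D0| + 1) / tau z.
have ht0 : 0 <= t by apply: divr_ge0; [apply: addr_ge0 | apply: ltW].
have htt : t * tau z = `|r - D0| + 1 by rewrite /t mulrAC -mulrA divff ?mulr1 // gt_eqF.
exists (lamS z t), (xiS z t), (piS z t); split.
  by move=> k; apply: mulr_ge0 => //; exact: z0.
apply: (@lt_le_trans _ _ (r + 1)); first lra.
apply: dual_ge => y; rewrite lagS zA.
have := D0_le y; have := ler_norm (r - D0); have := z0 (inl y).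
have : 0 <= t * z (inl y) by apply: mulr_ge0.
nra.
Qed.

Lemma sum_mulN1 (T : finType) (f : T -> R) : \sum_j -1 * f j = - \sum_j f j.
Proof. by rewrite -sumrN; apply: eq_bigr => j _; rewrite mulN1r. Qed.
Lemma sum_mul1 (T : finType) (f : T -> R) : \sum_j 1 * f j = \sum_j f j.
Proof. by apply: eq_bigr => j _; rewrite mul1r. Qed.
Lemma sum_mulN (T : finType) (a f : T -> R) : \sum_j (- a j) * f j = - \sum_j a j * f j.
Proof. by rewrite -sumrN; apply: eq_bigr => j _; rewrite mulNr. Qed.

Lemma mu_facts mu : pfeas Amat bvec mu ->
  [/\ (forall y, 0 <= mu y), \sum_y mu y = 1,
      (forall i, \sum_y gI y i * mu y = 0),
      (forall m, \sum_y hM y m * mu y = 0) &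
      (forall k, \sum_y fK y k * mu y <= 0)].
Proof.
move=> h; split.
- move=> y; have := h (inl y); rewrite /= (bigD1 y) //= eqxx mul1r big1 ?addr0 //.
  by move=> y' hy; rewrite eq_sym (negbTE hy) mul0r.
- have := h (inr (inl true)); have := h (inr (inl false)); rewrite /= /sg.
  rewrite sum_mulN1 sum_mul1 => h1 h2; lra.
- move=> i; have := h (inr (inr (inl (inl i)))); have := h (inr (inr (inl (inr i)))).
  rewrite /= sum_mulN => h1 h2; lra.
- move=> m; have := h (inr (inr (inr (inl (inl m))))); have := h (inr (inr (inr (inl (inr m))))).
  rewrite /= sum_mulN => h1 h2; lra.
- move=> k; have := h (inr (inr (inr (inr k)))).
  rewrite /= sum_mulN => h1; lra.
Qed.

Definition Y1 (mu : Yt -> R) i p := \sum_y mu y * yval R y i p.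
Definition Y2 (mu : Yt -> R) i j p q := \sum_y mu y * (yval R y i p * yval R y j q).

Lemma yval_b (y : Yt) i p : 0 <= yval R y i p <= 1.
Proof. by rewrite /yval; case: (y (i, p)); rewrite /= ?ler01 ?lexx. Qed.

Lemma yval_p (y : Yt) i j p q :
  [/\ 0 <= yval R y i p * yval R y j q, yval R y i p * yval R y j q <= 1,
      yval R y i p * yval R y j q <= yval R y i p &
      yval R y i p * yval R y j q <= yval R y j q].
Proof.
by rewrite /yval; case: (y (i, p)); case: (y (j, q)); rewrite /= ?mul1r ?mul0r ?ler01 ?lexx.
Qed.

Lemma lin_mix mu (W : V -> P -> R) :
  \sum_i \sum_p W i p * Y1 mu i p = \sum_y mu y * (\sum_i \sum_p W i p * yval R y i p).
Proof.
under [RHS]eq_bigr do rewrite mulr_sumr.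
rewrite [RHS]exchange_big; apply: eq_bigr => i _.
under [RHS]eq_bigr do rewrite mulr_sumr.
rewrite [RHS]exchange_big; apply: eq_bigr => p _.
by rewrite /Y1 mulr_sumr; apply: eq_bigr => y _; ring.
Qed.

Lemma lin_mix1 mu i :
  \sum_p Y1 mu i p = \sum_y mu y * (\sum_p yval R y i p).
Proof.
under [RHS]eq_bigr do rewrite mulr_sumr.
by rewrite [RHS]exchange_big.
Qed.

Lemma lin_mix2 mu :
  \sum_(e in E) \sum_p \sum_q th2 e.1 e.2 p q * Y2 mu e.1 e.2 p q =
  \sum_y mu y * (\sum_(e in E) \sum_p \sum_q th2 e.1 e.2 p q * yval R y e.1 p * yval R y e.2 q).
Proof.
under [RHS]eq_bigr do rewrite mulr_sumr.
rewrite [RHS]exchange_big; apply: eq_bigr => e _.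
under [RHS]eq_bigr do rewrite mulr_sumr.
rewrite [RHS]exchange_big; apply: eq_bigr => p _.
under [RHS]eq_bigr do rewrite mulr_sumr.
rewrite [RHS]exchange_big; apply: eq_bigr => q _.
by rewrite /Y2 mulr_sumr; apply: eq_bigr => y _; ring.
Qed.

Lemma A2 mu : pfeas Amat bvec mu ->
  lp_feasible E w c v d (Y1 mu) (Y2 mu) /\
  lp_objective E th1 th2 (Y1 mu) (Y2 mu) = \sum_y cvec y * mu y.
Proof.
move=> /mu_facts [m0 m1 mg mh mf].
have hsum : forall (G : Yt -> R), \sum_y mu y * G y <= \sum_y mu y * 1 ->
   True by [].
split; first split.
- move=> i p; apply/andP; split.
    by apply: sumr_ge0 => y _; apply: mulr_ge0 => //; have /andP[] := yval_b y i p.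
  rewrite -m1; apply: ler_sum => y _; rewrite -[X in _ <= X]mulr1.
  by apply: ler_wpM2l => //; have /andP[] := yval_b y i p.
- split => e _ p q.
    apply/andP; split.
      by apply: sumr_ge0 => y _; apply: mulr_ge0 => //; have [] := yval_p y e.1 e.2 p q.
    rewrite -m1; apply: ler_sum => y _; rewrite -[X in _ <= X]mulr1.
    by apply: ler_wpM2l => //; have [] := yval_p y e.1 e.2 p q.
  split; apply: ler_sum => y _; apply: ler_wpM2l => //; by have [] := yval_p y e.1 e.2 p q.
- move=> i; rewrite lin_mix1.
  have <- : \sum_y gI y i * mu y + \sum_y mu y = 1 by rewrite mg m1 add0r.
  rewrite -big_split /=; apply: eq_bigr => y _; rewrite /gI; ring.
- move=> m; rewrite lin_mix.
  have <- : \sum_y hM y m * mu y + c m * \sum_y mu y = c m by rewrite mh m1 add0r mulr1.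
  rewrite mulr_sumr -big_split /=; apply: eq_bigr => y _; rewrite /hM; ring.
- move=> k; rewrite lin_mix.
  apply: (@le_trans _ _ (\sum_y fK y k * mu y + d k * \sum_y mu y)); last first.
    by rewrite m1 mulr1; have := mf k; lra.
  rewrite mulr_sumr -big_split /= le_eqVlt; apply/orP; left; apply/eqP.
  apply: eq_bigr => y _; rewrite /fK; ring.
rewrite /lp_objective lin_mix lin_mix2 -big_split /=; apply: eq_bigr => y _.
rewrite /cvec /energyI; ring.
Qed.

Lemma dfeas0 : exists z, dfeas Amat cvec z.
Proof.
exists (fun r : Rw => match r with
  | inl y => energyI E th1 th2 y + `|D0|
  | inr (inl false) => `|D0|
  | _ => 0 end); split.
- case=> [y|[s|r]] /=.
  + have := D0_le y; have := ler_norm (- D0); rewrite normrN; lra.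
  + by case: s.
  + by case: r => [[i|i]|[[m|m]|k]].
- move=> y; rewrite Adecomp /tau /zLP /zLN /zMP /zMN /zK /= !big1 /cvec;
  try by move=> *; rewrite mul0r.
  ring.
Qed.

Lemma main_thm :
  ((exists y1 y2, lp_feasible E w c v d y1 y2) ->
   exists (lam : V -> R) (xi : 'I_M -> R) (pi : 'I_K -> R),
     [/\ (forall k, 0 <= pi k),
         (forall lam' xi' pi', (forall k, 0 <= pi' k) ->
             dualfun E th1 th2 w c v d lam' xi' pi'
               <= dualfun E th1 th2 w c v d lam xi pi) &
         exists y1 y2,
           [/\ lp_feasible E w c v d y1 y2,
               (forall z1 z2, lp_feasible E w c v d z1 z2 ->
                   lp_objective E th1 th2 y1 y2 <= lp_objective E th1 th2 z1 z2) &
               dualfun E th1 th2 w c v d lam xi pi = lp_objective E th1 th2 y1 y2]])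
  /\
  (~ (exists y1 y2, lp_feasible E w c v d y1 y2) ->
   forall r : R, exists (lam : V -> R) (xi : 'I_M -> R) (pi : 'I_K -> R),
     (forall k, 0 <= pi k) /\ r < dualfun E th1 th2 w c v d lam xi pi).
Proof.
split; last first.
  move=> nf; apply: unbounded => -[mu /A2 [hf _]]; apply: nf.
  by exists (Y1 mu), (Y2 mu).
move=> [z1 [z2 hz]].
have [mu0 hmu0] : exists mu, pfeas Amat bvec mu.
  case: (classic (exists mu, pfeas Amat bvec mu)) => // nf.
  have [lam [xi [pi [hpi hlt]]]] := unbounded nf (lp_objective E th1 th2 z1 z2).
  have := dual_le_lp lam xi hpi hz; rewrite leNgt hlt //.
have [z0 hz0] := dfeas0.
have [mu [z [hmu hz' heq]]] := strong_dual hmu0 hz0.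
rewrite bsum in heq.
have [hfe hobj] := A2 hmu.
have hpi : forall k, 0 <= piS z 1 k by move=> k; rewrite /piS mul1r /zK; case: hz' => h _; exact: h.
have hD : dualfun E th1 th2 w c v d (lamS z 1) (xiS z 1) (piS z 1) = tau z.
  apply/eqP; rewrite eq_le; apply/andP; split.
    by rewrite -heq -hobj; apply: dual_le_lp.
  apply: dual_ge => y; rewrite lagS mul1r.
  have [zz zA] := hz'; rewrite zA /cvec.
  have := zz (inl y); lra.
exists (lamS z 1), (xiS z 1), (piS z 1); split => //.
  by move=> lam' xi' pi' hpi'; rewrite hD -heq -hobj; apply: dual_le_lp.
exists (Y1 mu), (Y2 mu); split => //.
  by move=> z1' z2' hf'; rewrite hobj heq -hD; apply: dual_le_lp.
by rewrite hD hobj heq.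
Qed.
End Main.

Theorem theorem7 (R : realType) (V P : finType) (E : {set V * V})
  (th1 : V -> P -> R) (th2 : V -> V -> P -> P -> R)
  (M K : nat) (w : 'I_M -> V -> P -> R) (c : 'I_M -> R)
  (v : 'I_K -> V -> P -> R) (d : 'I_K -> R) :
  (forall i j, (i, j) \in E -> i != j) ->
  (forall i j, (i, j) \in E -> (j, i) \notin E) ->
  (forall e, e \in E -> forall p q, th2 e.1 e.2 p q <= 0) ->
  (* feasible LP: the maximum of D is attained and equals the LP optimum *)
  ((exists y1 y2, lp_feasible E w c v d y1 y2) ->
   exists (lam : V -> R) (xi : 'I_M -> R) (pi : 'I_K -> R),
     [/\ (forall k, 0 <= pi k),
         (forall lam' xi' pi', (forall k, 0 <= pi' k) ->
             dualfun E th1 th2 w c v d lam' xi' pi'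
               <= dualfun E th1 th2 w c v d lam xi pi) &
         exists y1 y2,
           [/\ lp_feasible E w c v d y1 y2,
               (forall z1 z2, lp_feasible E w c v d z1 z2 ->
                   lp_objective E th1 th2 y1 y2 <= lp_objective E th1 th2 z1 z2) &
               dualfun E th1 th2 w c v d lam xi pi = lp_objective E th1 th2 y1 y2]])
  /\
  (* infeasible LP (optimal value +oo): D is unbounded above *)
  (~ (exists y1 y2, lp_feasible E w c v d y1 y2) ->
   forall r : R, exists (lam : V -> R) (xi : 'I_M -> R) (pi : 'I_K -> R),
     (forall k, 0 <= pi k) /\ r < dualfun E th1 th2 w c v d lam xi pi).
Proof.
move=> _ _ hth2.
have := @main_thm R V P E th1 th2 M K w c v d hth2.
exact.
Qed.
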